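(* If $t$ is an odd positive integer, then there does not exist a skew starter in $\mathbb{Z}_{3t}$.
   Context: A skew starter in $\mathbb{Z}_g$ ($g$ odd) is a set of $(g-1)/2$ unordered pairs $\{\{x_i,y_i\}\}$ such that $\{x_i,y_i\}=\mathbb{Z}_g\setminus\{0\}$, $\{\pm(x_i-y_i)\}=\mathbb{Z}_g\setminus\{0\}$, and $\{\pm(x_i+y_i)\}=\mathbb{Z}_g\setminus\{0\}$. *)

(* Defs.v *)
From mathcomp Require Import all_boot all_order all_algebra.
Set Implicit Arguments. Unset Strict Implicit. Unset Printing Implicit Defensive.
Import GRing.Theory.
Local Open Scope ring_scope.

Definition nonzeroZ (g : nat) : seq 'Z_g := [seq z <- enum 'Z_g | z != 0].

(* A skew starter in Z_g (g odd): a list of (g-1)/2 pairs {x_i, y_i}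
   (order inside a pair is irrelevant since all conditions are symmetric)
   such that the multisets {x_i, y_i}, {±(x_i - y_i)} and {±(x_i + y_i)}
   are each exactly Z_g \ {0}. *)
Definition is_skew_starter (g : nat) (s : seq ('Z_g * 'Z_g)) : bool :=
  [&& odd g,
      size s == g.-1./2,
      perm_eq (flatten [seq [:: p.1; p.2] | p <- s]) (nonzeroZ g),
      perm_eq (flatten [seq [:: p.1 - p.2; p.2 - p.1] | p <- s]) (nonzeroZ g) &
      perm_eq (flatten [seq [:: p.1 + p.2; - (p.1 + p.2)] | p <- s]) (nonzeroZ g)].

(* Main.v *)
Require Import Defs.
From mathcomp Require Import all_boot all_order all_algebra.
From mathcomp Require Import zify ring.
Import GRing.Theory.

Lemma sumsq6 n : (6 * \sum_(0 <= i < n) i ^ 2 = n * (n - 1) * (2 * n - 1))%N.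
Proof.
elim: n => [|n IH]; first by rewrite big_geq.
rewrite big_nat_recr //= mulnDr IH; case: n {IH} => [|n] //. 
rewrite !subn1 /=; nia.
Qed.

Lemma id4 (R : comRingType) (a b : R) :
  ((a - b) ^+ 2 + ((b - a) ^+ 2 + 0) + ((a + b) ^+ 2 + ((- (a + b)) ^+ 2 + 0))
   = (a ^+ 2 + (b ^+ 2 + 0)) *+ 4)%R.
Proof. ring. Qed.

Lemma id5 (R : comRingType) (S : R) : (S *+ 2 - 0 = S *+ 4 - (S + S))%R.
Proof. ring. Qed.

Lemma mod3 t k : (0 < t)%N -> (3 * k = (3 * t - 1) * (6 * t - 1))%N -> False.
Proof.
case: t => [|u] // _ H.
have H2 : (3 * k = 18 * (u * u) + 27 * u + 10)%N by nia.
move: H2; set v := (u * u)%N; lia.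
Qed.

Lemma sum_flat (g : nat) (s : seq ('Z_g * 'Z_g)) (f : 'Z_g * 'Z_g -> seq 'Z_g)
  (F : 'Z_g -> 'Z_g) :
  (\sum_(z <- flatten [seq f p | p <- s]) F z =
   \sum_(p <- s) \sum_(z <- f p) F z)%R.
Proof. by rewrite big_flatten big_map. Qed.

Theorem mainTheorem7 (t : nat) : (0 < t)%N -> odd t ->
  ~ exists s : seq ('Z_(3 * t) * 'Z_(3 * t)), is_skew_starter s.
Proof.
move=> t0 _ [s /and5P [_ _ h1 h2 h3]].
set S := (\sum_(z <- nonzeroZ (3 * t)) z ^+ 2)%R.
have e1 : (\sum_(z <- _) z ^+ 2 = S)%R := perm_big _ h1.
have e2 : (\sum_(z <- _) z ^+ 2 = S)%R := perm_big _ h2.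
have e3 : (\sum_(z <- _) z ^+ 2 = S)%R := perm_big _ h3.
rewrite big_flatten big_map in e1; rewrite big_flatten big_map in e2; rewrite big_flatten big_map in e3.
have key : (S *+ 2 = 0 :> 'Z_(3 * t))%R.
  have : (\sum_(p <- s) (\sum_(z <- [:: p.1 - p.2; p.2 - p.1]) z ^+ 2
          + \sum_(z <- [:: p.1 + p.2; - (p.1 + p.2)]) z ^+ 2)
         = (\sum_(p <- s) \sum_(z <- [:: p.1; p.2]) z ^+ 2) *+ 4)%R.
    rewrite -sumrMnl; apply: eq_bigr => p _.
    by rewrite !big_cons !big_nil /= id4.
  rewrite big_split /= e1 e2 e3 => H.
  apply/eqP; rewrite -subr_eq0; apply/eqP.
  rewrite id5.
  by rewrite -H subrr.
have hS : (S = (\sum_(0 <= i < 3 * t) i ^ 2)%N%:R)%R.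
  rewrite /S /nonzeroZ big_filter big_mkcond /=.
  have -> : (\sum_(i <- enum 'Z_(3 * t)) (if i != 0 then i ^+ 2 else 0)
            = \sum_(i : 'Z_(3 * t)) ((val i) ^ 2)%N%:R)%R.
    rewrite big_enum /=; apply: eq_bigr => i _.
    case: eqP => [->|_]; first by rewrite expr0n.
    by rewrite natrX natr_Zp.
  rewrite -natr_sum; congr (_ %:R)%R.
  rewrite -(big_mkord xpredT (fun i => i ^ 2)) Zp_cast //; nia.
set N := (\sum_(0 <= i < 3 * t) i ^ 2)%N in hS.
have hN := sumsq6 (3 * t); rewrite -/N in hN.
move: key; rewrite hS -mulr_natr -natrM Zp_nat => /(congr1 val) /=.
rewrite Zp_cast; last by nia.
move/eqP; rewrite -/(dvdn _ _) => /dvdnP [k hk].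
have hk3 : (3 * k = (3 * t - 1) * (6 * t - 1))%N.
  apply/eqP; rewrite -(eqn_pmul2l (_ : 0 < 3 * t)%N); last by nia.
  apply/eqP; nia.
exact: (@mod3 t k t0 hk3).
Qed.
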